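(* For all $n\geq 1$, $s_{n,2}(112,122)=c_n=\frac{1}{n+1}\binom{2n}{n}$, the $n$-th Catalan number.
   Context: For positive integers $n,m$, $[n]_m$ denotes the regular multiset $\{1^m,\ldots,n^m\}$, and a permutation of $[n]_m$ is a sequence of length $nm$ in which each $i\in[n]$ appears exactly $m$ times. A sequence $\sigma$ contains a pattern $\pi=\pi_1\cdots\pi_k$ if it has a subsequence $\sigma_{i_1}\cdots\sigma_{i_k}$ ($i_1<\dots<i_k$) order-isomorphic to $\pi$, i.e. $\sigma_{i_a}<\sigma_{i_b}\iff\pi_a<\pi_b$ and $\sigma_{i_a}=\sigma_{i_b}\iff\pi_a=\pi_b$; otherwise it avoids $\pi$. $s_{n,m}(\Pi)$ is the number of permutations of $[n]_m$ avoiding all patterns in $\Pi$. *)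

(* Defs.v *)
From mathcomp Require Import all_boot.
Set Implicit Arguments. Unset Strict Implicit. Unset Printing Implicit Defensive.

Definition order_iso (t p : seq nat) : bool :=
  (size t == size p) &&
  [forall i : 'I_(size t), forall j : 'I_(size t),
     ((nth 0 t i < nth 0 t j) == (nth 0 p i < nth 0 p j)) &&
     ((nth 0 t i == nth 0 t j) == (nth 0 p i == nth 0 p j))].

Definition contains (sigma pi : seq nat) : bool :=
  [exists msk : (size sigma).-tuple bool, order_iso (mask msk sigma) pi].

Definition avoids_all (sigma : seq nat) (Pi : seq (seq nat)) : bool :=
  all (fun pi => ~~ contains sigma pi) Pi.

Definition is_multiperm (n m : nat) (s : seq nat) : bool :=
  all (fun x => 1 <= x <= n) s && all (fun i => count_mem i s == m) (iota 1 n).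

Definition seq_of_tuple (n m : nat) (t : (n * m).-tuple 'I_n) : seq nat :=
  map (fun i : 'I_n => (i : nat).+1) t.

Definition s_count (n m : nat) (Pi : seq (seq nat)) : nat :=
  #|[set t : (n * m).-tuple 'I_n |
       is_multiperm n m (seq_of_tuple t) && avoids_all (seq_of_tuple t) Pi]|.

Definition catalan (n : nat) : nat := 'C(n.*2, n) %/ n.+1.

(* Main.v *)
Require Import Defs.
From mathcomp Require Import all_boot zify.
Set Implicit Arguments. Unset Strict Implicit. Unset Printing Implicit Defensive.

Fixpoint V (a b : nat) (s : seq nat) : bool :=
  match s with
  | [::] => (a == 0) && (b == 0)
  | x :: s' => ((x == a) && (0 < a) && V a.-1 b s') || ((x == b) && (a < b) && V a b.-1 s')
  end.

Fixpoint genV (k a b : nat) : seq (seq nat) :=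
  match k with
  | 0 => if (a == 0) && (b == 0) then [:: [::]] else [::]
  | k'.+1 => (if 0 < a then map (cons a) (genV k' a.-1 b) else [::]) ++
             (if a < b then map (cons b) (genV k' a b.-1) else [::])
  end.

Lemma mem_cons_map (x a : nat) s L : (x :: s \in map (cons a) L) = (x == a) && (s \in L).
Proof.
case: eqP => [->|ne]; first by rewrite mem_map //; move=> u v [].
by apply/mapP => -[y _ [e _]].
Qed.

Lemma mem_genV k a b s : a + b = k -> (s \in genV k a b) = V a b s.
Proof.
elim: k a b s => [|k IH] a b s hk.
  have [-> ->] : a = 0 /\ b = 0 by lia.
  by case: s => [|x s] //=; rewrite andbF.
case: s => [|x s] /=.
  have nm : forall c (L : seq (seq nat)), ([::] \in map (cons c) L) = false.
    by move=> c L; apply: negbTE; apply/negP => /mapP [].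
  have -> : (a == 0) && (b == 0) = false by apply: negbTE; lia.
  by rewrite mem_cat; case: (0 < a); case: (a < b); rewrite /= ?nm.
rewrite mem_cat.
case ha: (0 < a); case hb: (a < b); rewrite /= ?in_nil ?andbF ?orbF //=;
 rewrite ?mem_cons_map ?IH //; lia.
Qed.

Lemma uniq_genV k a b : uniq (genV k a b).
Proof.
elim: k a b => [|k IH] a b /=; first by case: ifP.
rewrite cat_uniq; apply/and3P; split.
- by case: ifP => // _; rewrite map_inj_uniq //; move=> u v [].
- case: (ltnP a b) => hab; last by [].
  apply/hasPn => s /mapP [y _ ->].
  case: ifP => // ha; rewrite /= mem_cons_map; apply/nandP; left; lia.
- by case: ifP => // _; rewrite map_inj_uniq //; move=> u v [].
Qed.

Lemma size_genV k a b : a + b = k -> a <= b -> size (genV k a b) + 'C(k, b.+1) = 'C(k, b).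
Proof.
elim: k a b => [|k IH] a b hk hab.
  have [-> ->] : a = 0 /\ b = 0 by lia. by [].
rewrite /= size_cat.
case: a hk hab => [|a] hk hab.
  have hb : b = k.+1 by lia. subst b.
  have := IH 0 k erefl (leq0n _).
  rewrite /= size_map bin_small // binn bin_small // binn => ->. by [].
case: (ltngtP a.+1 b) => [lt|gt|eq]; last first.
- subst b. rewrite /= addn0 size_map.
  have := IH a a.+1 (ltac:(lia)) (leqnSn a).
  have hk' : k = a + a.+1 by lia. subst k.
  rewrite !binS.
  have e : 'C(a + a.+1, a) = 'C(a + a.+1, a.+1).
    have := bin_sub (n:=a + a.+1) (m:=a.+1) (ltac:(lia)).
    by have -> : a + a.+1 - a.+1 = a by lia.
  lia.
- lia.
- rewrite /= !size_map.
  case: b hk hab lt => [|b] hk hab lt; first lia.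
  have h1 := IH a b.+1 (ltac:(lia)) (ltac:(lia)).
  have h2 := IH a.+1 b (ltac:(lia)) (ltac:(lia)).
  rewrite /= in h2. rewrite !binS /=. lia.
Qed.

Lemma catalanE n : size (genV (n + n) n n) = catalan n.
Proof.
have h := size_genV (k := n + n) (a := n) (b := n) erefl (leqnn n).
have h2 := mul_bin_left (n + n) n.
rewrite /catalan -addnn.
have -> : 'C(n + n, n) = size (genV (n + n) n n) * n.+1.
  have e : n + n - n = n by lia. rewrite e in h2.
  rewrite -h in h2 *. nia.
by rewrite mulnK.
Qed.

Lemma Vsize a b s : V a b s -> size s = a + b.
Proof.
elim: s a b => [|x s IH] a b /=; first by case/andP => /eqP -> /eqP ->.
case/orP => /andP [/andP [_ h] /IH ->]; lia.
Qed.

Lemma Vall a b s : V a b s -> a <= b -> all (fun x => 0 < x <= b) s.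
Proof.
elim: s a b => [|x s IH] a b //=.
case/orP => /andP [/andP [/eqP -> h] hV] hab.
  rewrite h (leq_trans _ hab) //=; exact: IH hV (leq_trans (leq_pred a) hab).
have := IH _ _ hV (ltac:(lia)).
rewrite (leq_ltn_trans (leq0n a) h) leqnn /=.
apply: sub_all => y /andP [-> h2]; rewrite /=; lia.
Qed.

Ltac boolsolve := repeat match goal with
 | |- context [?x < ?y] => case: (ltnP x y) => ?
 | |- context [?x <= ?y] => case: (leqP x y) => ?
 | |- context [?x == ?y] => case: (eqVneq x y) => ?
 end; simpl; lia.

Lemma Vcount a b s i : V a b s -> a <= b ->
  count_mem i s = (0 < i <= a) + (0 < i <= b).
Proof.
elim: s a b => [|x s IH] a b /=; first by case/andP => /eqP -> /eqP -> _; case: i.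
case/orP => /andP [/andP [/eqP -> h] hV] hab.
  rewrite (IH _ _ hV (ltac:(lia))); clear IH. boolsolve.
rewrite (IH _ _ hV (ltac:(lia))); clear IH. boolsolve.
Qed.

Lemma subseq_cons2 (x z : nat) p s : subseq (x :: p) (z :: s) = subseq (if x == z then p else x :: p) s.
Proof. by []. Qed.

Lemma V_pair a b s x y : V a b s -> a <= b -> a < x -> x < y -> ~~ subseq [:: x; y] s.
Proof.
elim: s a b => [|z s IH] a b //=.
case/orP => /andP [/andP [/eqP -> h] hV] hab hax hxy.
  have -> : (x == a) = false by lia.
  exact: IH hV (ltac:(lia)) (ltac:(lia)) hxy.
case: eqP => [ex|nx].
  rewrite sub1seq; apply/negP => hy.
  have /allP /(_ _ hy) := Vall hV (ltac:(lia)). lia.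
exact: IH hV (ltac:(lia)) hax hxy.
Qed.

Lemma V_112 a b s x y : V a b s -> a <= b -> x < y -> ~~ subseq [:: x; x; y] s.
Proof.
elim: s a b => [|z s IH] a b //=.
case/orP => /andP [/andP [/eqP -> h] hV] hab hxy.
  case: eqP => [ex|nx]; last exact: IH hV (ltac:(lia)) hxy.
  by apply: (V_pair hV); lia.
case: eqP => [ex|nx]; last exact: IH hV (ltac:(lia)) hxy.
apply/negP => /(subseq_trans (suffix_subseq [:: x] [:: y])).
rewrite sub1seq => hy.
have /allP /(_ _ hy) := Vall hV (ltac:(lia)). lia.
Qed.

Lemma V_22 a b s y : V a b s -> a <= b -> a < y -> ~~ subseq [:: y; y] s.
Proof.
elim: s a b => [|z s IH] a b //=.
case/orP => /andP [/andP [/eqP -> h] hV] hab hay.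
  have -> : (y == a) = false by lia.
  exact: IH hV (ltac:(lia)) (ltac:(lia)).
case: eqP => [ey|ny]; last exact: IH hV (ltac:(lia)) hay.
rewrite sub1seq; apply/negP => hy.
have /allP /(_ _ hy) := Vall hV (ltac:(lia)). lia.
Qed.

Lemma V_122 a b s x y : V a b s -> a <= b -> x < y -> ~~ subseq [:: x; y; y] s.
Proof.
elim: s a b => [|z s IH] a b //=.
case/orP => /andP [/andP [/eqP -> h] hV] hab hxy.
  case: eqP => [ex|nx]; last exact: IH hV (ltac:(lia)) hxy.
  by apply: (V_22 hV); lia.
case: eqP => [ex|nx]; last exact: IH hV (ltac:(lia)) hxy.
apply/negP => /(subseq_trans (suffix_subseq [:: y] [:: y])).
rewrite sub1seq => hy.
have /allP /(_ _ hy) := Vall hV (ltac:(lia)). lia.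
Qed.

Lemma cnt2 (x : nat) s : 1 < count_mem x s -> subseq [:: x; x] s.
Proof.
elim: s => [|z s IH] //=.
move=> h; case: (eqVneq z x) h => [e|nz] h; first subst z.
  rewrite /= in h.
  rewrite sub1seq -has_pred1 has_count; exact: h.
by move: h; rewrite /= add0n; exact: IH.
Qed.

Lemma QV s : forall a b, a <= b -> all (fun x => 0 < x <= b) s ->
  (forall i, 0 < i -> i <= a -> count_mem i s = 2) ->
  (forall i, a < i -> i <= b -> count_mem i s = 1) ->
  (forall x y, x < y -> ~~ subseq [:: x; x; y] s) ->
  (forall x y, x < y -> ~~ subseq [:: x; y; y] s) ->
  (forall v w, a < v -> v < w -> w <= b -> ~~ subseq [:: v; w] s) ->
  V a b s.
Proof.
elim: s => [|z s IH] a b hab hall h2 h1 n112 n122 npair /=.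
  have a0 : ~~ (0 < a) by apply/negP => ha; have := h2 a ha (leqnn a); move=> /= h.
  have b0 : ~~ (0 < b).
    apply/negP => hb; case: (leqP b a) => ba; [have := h2 b hb ba | have := h1 b ba (leqnn b)]; by move=> /= h.
  by apply/andP; split; apply/eqP; lia.
move: hall => /= /andP [/andP [z0 zb] hall].
have sub : forall u, subseq u s -> subseq u (z :: s).
  by move=> u hu; apply: subseq_trans hu (subseq_cons s z).
case: (leqP z a) => za.
  have eza : z = a.
    apply/eqP; rewrite eqn_leq za /= leqNgt; apply/negP => lt.
    have ca := h2 a (ltac:(lia)) (leqnn a).
    rewrite /= (_ : (z == a) = false) /= in ca; last lia.
    have := n122 z a lt; rewrite /= eqxx cnt2 //; rewrite add0n in ca; by rewrite ca.
  subst z. rewrite eqxx z0 /=; apply/orP; left.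
  apply: IH => //; first lia.
  - move=> i i0 ia; have := h2 i i0 (ltac:(lia)); rewrite /= (_ : (a == i) = false) //; lia.
  - move=> i ai ib; case: (eqVneq i a) => [->|nia].
      have := h2 a z0 (leqnn a); rewrite /= eqxx; lia.
    have := h1 i (ltac:(lia)) ib; rewrite /= (_ : (a == i) = false) //; lia.
  - by move=> x y hxy; apply/negP => /sub; apply/negP; apply: n112.
  - by move=> x y hxy; apply/negP => /sub; apply/negP; apply: n122.
  - move=> v w av vw wb; case: (eqVneq v a) => [ev|nva].
      subst v; apply/negP => hs; have := n112 a w vw; rewrite /= eqxx hs //.
    by apply/negP => /sub; apply/negP; apply: npair => //; lia.
have ezb : z = b.
  apply/eqP; rewrite eqn_leq zb /= leqNgt; apply/negP => lt.
  have cb := h1 b (ltac:(lia)) (leqnn b).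
  rewrite /= (_ : (z == b) = false) /= ?add0n in cb; last lia.
  have := npair z b za (ltac:(lia)) (leqnn b).
  by rewrite /= eqxx sub1seq -has_pred1 has_count cb.
subst z. apply/orP; right; rewrite eqxx za /=.
have cb := h1 b za (leqnn b); rewrite /= eqxx in cb.
have nb : b \notin s by rewrite -has_pred1 has_count; move: cb => /= [] /=; rewrite add0n => ->.
apply: IH => //; first lia.
- apply/allP => y hy; have /andP [-> yb] := allP hall y hy.
  have : y != b by apply: contraNneq nb => <-.
  lia.
- move=> i i0 ia; have := h2 i i0 ia; rewrite /= (_ : (b == i) = false) //; lia.
- move=> i ai ib; have := h1 i ai (ltac:(lia)); rewrite /= (_ : (b == i) = false) //; lia.
- by move=> x y hxy; apply/negP => /sub; apply/negP; apply: n112.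
- by move=> x y hxy; apply/negP => /sub; apply/negP; apply: n122.
- by move=> v w av vw wb; apply/negP => /sub; apply/negP; apply: npair => //; lia.
Qed.

Lemma contains_sub (sg u p : seq nat) : subseq u sg -> order_iso u p -> contains sg p.
Proof.
case/subseqP => m hm -> hiso.
apply/existsP; exists (@Tuple (size sg) bool m (introT eqP hm)); exact: hiso.
Qed.

Lemma contains_inv (sg p : seq nat) : contains sg p -> exists2 u, subseq u sg & order_iso u p.
Proof.
case/existsP => msk h; exists (mask msk sg) => //; exact: mask_subseq.
Qed.

Lemma oi112 x y : x < y -> order_iso [:: x; x; y] [:: 1; 1; 2].
Proof.
move=> hxy; apply/andP; split => //.
apply/forallP => -[[|[|[|i]]] hi] //; apply/forallP => -[[|[|[|j]]] hj] //=;
  rewrite ?ltnn ?eqxx ?hxy ?(ltn_eqF hxy) ?(gtn_eqF hxy) ?(ltnNge y x) ?(ltnW hxy) //.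
Qed.

Lemma oi122 x y : x < y -> order_iso [:: x; y; y] [:: 1; 2; 2].
Proof.
move=> hxy; apply/andP; split => //.
apply/forallP => -[[|[|[|i]]] hi] //; apply/forallP => -[[|[|[|j]]] hj] //=;
  rewrite ?ltnn ?eqxx ?hxy ?(ltn_eqF hxy) ?(gtn_eqF hxy) ?(ltnNge y x) ?(ltnW hxy) //.
Qed.

Lemma inv112 u : order_iso u [:: 1; 1; 2] -> exists x y, u = [:: x; x; y] /\ x < y.
Proof.
case/andP => /eqP hs /forallP H.
case: u hs H => [|u0 [|u1 [|u2 [|]]]] // _ H.
have /forallP /(_ (@Ordinal 3 1 isT)) /= /andP [_ /eqP e01] := H (@Ordinal 3 0 isT).
have /forallP /(_ (@Ordinal 3 2 isT)) /= /andP [/eqP l02 _] := H (@Ordinal 3 0 isT).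
exists u0, u2; split; last by rewrite l02.
by have /eqP -> : u0 == u1 by rewrite e01.
Qed.

Lemma inv122 u : order_iso u [:: 1; 2; 2] -> exists x y, u = [:: x; y; y] /\ x < y.
Proof.
case/andP => /eqP hs /forallP H.
case: u hs H => [|u0 [|u1 [|u2 [|]]]] // _ H.
have /forallP /(_ (@Ordinal 3 2 isT)) /= /andP [_ /eqP e12] := H (@Ordinal 3 1 isT).
have /forallP /(_ (@Ordinal 3 1 isT)) /= /andP [/eqP l01 _] := H (@Ordinal 3 0 isT).
exists u0, u1; split; last by rewrite l01.
by have /eqP -> : u1 == u2 by rewrite e12.
Qed.

Lemma charac n s : (is_multiperm n 2 s && avoids_all s [:: [:: 1; 1; 2]; [:: 1; 2; 2]]) = V n n s.
Proof.
apply/idP/idP.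
- case/andP => /andP [hall /allP hc]; rewrite /avoids_all /= andbT => /andP [n1 n2].
  apply: QV => //.
  + move=> i i0 ia; apply/eqP; apply: hc; rewrite mem_iota; lia.
  + move=> i ai ib; lia.
  + move=> x y hxy; apply/negP => hs; move/negP: n1; apply; exact: contains_sub hs (oi112 hxy).
  + move=> x y hxy; apply/negP => hs; move/negP: n2; apply; exact: contains_sub hs (oi122 hxy).
  + move=> v w; lia.
- move=> hV; apply/andP; split.
  + apply/andP; split; first exact: Vall hV (leqnn n).
    apply/allP => i; rewrite mem_iota => hi; rewrite (Vcount i hV (leqnn n)).
    have -> : (0 < i <= n) = true by apply/andP; split; lia.
    by [].
  + rewrite /avoids_all /= andbT; apply/andP; split; apply/negP.
    * move=> /contains_inv [u hs /inv112 [x [y [ex hxy]]]]; subst u; move: hs; apply/negP.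
      exact: V_112 hV (leqnn n) hxy.
    * move=> /contains_inv [u hs /inv122 [x [y [ex hxy]]]]; subst u; move: hs; apply/negP.
      exact: V_122 hV (leqnn n) hxy.
Qed.

Theorem theorem2 (n : nat) (hn : 1 <= n) :
  s_count n 2 [:: [:: 1; 1; 2]; [:: 1; 2; 2]] = catalan n.
Proof.
case: n hn => // n _.
rewrite /s_count -catalanE.
rewrite -(size_image (@seq_of_tuple n.+1 2)).
apply: perm_size; apply: uniq_perm.
- rewrite /image_mem map_inj_uniq ?enum_uniq //.
  have inj : injective (fun i : 'I_n.+1 => (i : nat).+1) by move=> i j [] /val_inj.
  by move=> t1 t2 /(inj_map inj) /val_inj.
- exact: uniq_genV.
- move=> s; rewrite mem_genV //; apply/imageP/idP.
  + by case=> t; rewrite inE charac => ht ->.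
  + move=> hV.
    pose g (x : nat) : 'I_n.+1 := inord x.-1.
    have hsz : size (map g s) == n.+1 * 2 by rewrite size_map (Vsize hV); apply/eqP; lia.
    have e : seq_of_tuple (Tuple hsz) = s.
      rewrite /seq_of_tuple /= -map_comp; apply: map_id_in => x hx /=.
      have /allP /(_ x hx) := Vall hV (leqnn _).
      move=> /andP [x0 xn]; rewrite /g inordK; lia.
    by exists (Tuple hsz); rewrite ?inE e ?charac.
Qed.
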